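(* Let $r>0$, $\mathbf{c}=(c_1,c_2,\dots,c_n)\in\mathbb{R}^n_{\ge0}$ and $\mathbf{c}'=(c_1,0,\dots,0)$. Then $$\mathrm{Vol}\big(C(\mathbf{0},1)\cap C(\mathbf{c},r)\big)\le \mathrm{Vol}\big(C(\mathbf{0},1)\cap C(\mathbf{c}',r)\big).$$
   Context: For $\mathbf{c}\in\mathbb{R}^n$, $r\ge 0$, $C(\mathbf{c},r)=\{\mathbf{x}\in\mathbb{R}^n:\|\mathbf{x}-\mathbf{c}\|_1\le r\}$. *)

(* Defs.v *)
(* classical reals.  Points of R^n are functions nat -> R of which
   only the coordinates 0..n-1 are relevant (coordinate i here = c_{i+1} in the paper). *)
From Stdlib Require Import Reals.
Open Scope R_scope.

Fixpoint sumR (n : nat) (f : nat -> R) : R :=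
  match n with O => 0 | S m => sumR m f + f m end.

Fixpoint prodR (n : nat) (f : nat -> R) : R :=
  match n with O => 1 | S m => prodR m f * f m end.

Definition norm1 (n : nat) (x : nat -> R) : R := sumR n (fun i => Rabs (x i)).

Definition l1ball (n : nat) (c : nat -> R) (r : R) : (nat -> R) -> Prop :=
  fun x => norm1 n (fun i => x i - c i) <= r.

Definition origin : nat -> R := fun _ => 0.

Definition in_box (n : nat) (a b : nat -> R) (x : nat -> R) : Prop :=
  forall i, (i < n)%nat -> a i <= x i <= b i.
Definition box_vol (n : nat) (a b : nat -> R) : R := prodR n (fun i => b i - a i).

Definition box_cover_sum (n : nat) (S : (nat -> R) -> Prop) (s : R) : Prop :=
  exists a b : nat -> nat -> R,
    (forall j i, (i < n)%nat -> a j i <= b j i) /\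
    (forall x, S x -> exists j, in_box n (a j) (b j) x) /\
    infinite_sum (fun j => box_vol n (a j) (b j)) s.

(* v = Vol(S): the Lebesgue (outer) measure of S, i.e. the infimum of the
   total volumes of countable box covers of S. *)
Definition is_volume (n : nat) (S : (nat -> R) -> Prop) (v : R) : Prop :=
  (forall s, box_cover_sum n S s -> v <= s) /\
  (forall w, (forall s, box_cover_sum n S s -> w <= s) -> w <= v).

(* Main.v *)
Require Import Defs.
From Stdlib Require Import Reals Lra Lia FunctionalExtensionality ClassicalEpsilon Classical PropExtensionality.
Open Scope R_scope.

Lemma sumR_ext n f g : (forall i, (i < n)%nat -> f i = g i) -> sumR n f = sumR n g.
Proof. induction n; simpl; intros H; auto. rewrite IHn by (intros; apply H; lia). rewrite H by lia; auto. Qed.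

Lemma sumR_le n f g : (forall i, (i < n)%nat -> f i <= g i) -> sumR n f <= sumR n g.
Proof. induction n; simpl; intros H; [lra|]. specialize (IHn ltac:(intros; apply H; lia)). specialize (H n ltac:(lia)). lra. Qed.

Lemma sumR_nonneg n f : (forall i, (i < n)%nat -> 0 <= f i) -> 0 <= sumR n f.
Proof. intros H. replace 0 with (sumR n (fun _ => 0)). apply sumR_le; auto.
  induction n; simpl; auto. rewrite IHn; try lra. intros; apply H; lia. Qed.

Lemma sumR_add a b f : sumR (a + b) f = sumR a f + sumR b (fun i => f (a + i)%nat).
Proof. induction b; simpl. rewrite Nat.add_0_r; lra. rewrite Nat.add_succ_r. simpl. rewrite IHb. lra. Qed.

Lemma sumR_mono_len a b f : (forall i, 0 <= f i) -> (a <= b)%nat -> sumR a f <= sumR b f.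
Proof. intros H Hab. replace b with (a + (b - a))%nat by lia. rewrite sumR_add.
  assert (0 <= sumR (b - a) (fun i => f (a + i)%nat)) by (apply sumR_nonneg; auto). lra. Qed.

Lemma sumR_plus n f g : sumR n (fun i => f i + g i) = sumR n f + sumR n g.
Proof. induction n; simpl; lra. Qed.

Lemma sumR_const n c : sumR n (fun _ => c) = INR n * c.
Proof. induction n; simpl sumR. simpl; lra. rewrite IHn, S_INR. lra. Qed.

Lemma sumR_scal n a f : sumR n (fun i => a * f i) = a * sumR n f.
Proof. induction n; simpl; lra. Qed.

Lemma sumR_term n f i : (forall j, (j < n)%nat -> 0 <= f j) -> (i < n)%nat -> f i <= sumR n f.
Proof. induction n; intros H Hi; [lia|]. simpl.
  assert (0 <= sumR n f) by (apply sumR_nonneg; intros; apply H; lia).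
  destruct (Nat.eq_dec i n). subst; lra.
  assert (f i <= sumR n f) by (apply IHn; [intros; apply H|]; lia).
  specialize (H n ltac:(lia)). lra. Qed.

Lemma sumR_split n k f : (k < n)%nat -> sumR n f = f k + sumR n (fun i => if Nat.eqb i k then 0 else f i).
Proof. induction n; intros Hk; [lia|]. simpl. destruct (Nat.eq_dec k n).
  - subst. rewrite Nat.eqb_refl. rewrite (sumR_ext n (fun i => if Nat.eqb i n then 0 else f i) f). lra.
    intros i Hi. destruct (Nat.eqb_spec i n); [lia|auto].
  - rewrite (IHn ltac:(lia)). destruct (Nat.eqb_spec n k); [lia|]. lra. Qed.

Lemma sumR_block J T g : (T <> 0)%nat ->
  sumR (J * T) (fun k => g (k / T)%nat (k mod T)%nat) = sumR J (fun j => sumR T (g j)).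
Proof. intros HT. induction J. simpl; auto.
  replace (S J * T)%nat with (J * T + T)%nat by lia. rewrite sumR_add, IHJ. simpl.
  f_equal. apply sumR_ext. intros i Hi. rewrite (Nat.div_add_l J T i HT), Nat.div_small by auto.
  rewrite Nat.add_0_r. f_equal. rewrite Nat.add_comm, Nat.Div0.mod_add. apply Nat.mod_small; auto. Qed.

Lemma block_div j T m : (m < T)%nat -> ((j * T + m) / T)%nat = j.
Proof. intros H. rewrite Nat.div_add_l by lia. rewrite Nat.div_small by auto. lia. Qed.
Lemma block_mod j T m : (m < T)%nat -> ((j * T + m) mod T)%nat = m.
Proof. intros H. rewrite Nat.add_comm, Nat.Div0.mod_add. apply Nat.mod_small; auto. Qed.

Lemma prodR_ext n f g : (forall i, (i < n)%nat -> f i = g i) -> prodR n f = prodR n g.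
Proof. induction n; simpl; intros H; auto. rewrite IHn by (intros; apply H; lia). rewrite H by lia; auto. Qed.

Lemma prodR_nonneg n f : (forall i, (i < n)%nat -> 0 <= f i) -> 0 <= prodR n f.
Proof. induction n; simpl; intros H; [lra|]. apply Rmult_le_pos. apply IHn; intros; apply H; lia. apply H; lia. Qed.

Lemma prodR_lin n k X w : (k < n)%nat ->
  prodR n (fun i => if Nat.eqb i k then X else w i) = X * prodR n (fun i => if Nat.eqb i k then 1 else w i).
Proof. induction n; intros Hk; [lia|]. simpl. destruct (Nat.eq_dec k n).
  - subst. rewrite Nat.eqb_refl.
    rewrite (prodR_ext n (fun i => if Nat.eqb i n then X else w i) (fun i => if Nat.eqb i n then 1 else w i)). lra.
    intros i Hi. destruct (Nat.eqb_spec i n); [lia|auto].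
  - rewrite (IHn ltac:(lia)). destruct (Nat.eqb_spec n k); [lia|]. lra. Qed.

Lemma prodR_div n w N : N <> 0 -> prodR n (fun i => w i / N) * N ^ n = prodR n w.
Proof. intros HN. induction n; simpl. lra. rewrite <- IHn. field. auto. Qed.

Lemma prodR_scale n k w N : (k < n)%nat -> N <> 0 ->
  prodR n (fun i => if Nat.eqb i k then 1 else w i / N) * N ^ (n - 1) = prodR n (fun i => if Nat.eqb i k then 1 else w i).
Proof. induction n; intros Hk HN; [lia|]. simpl prodR. destruct (Nat.eq_dec k n).
  - subst. rewrite Nat.eqb_refl. replace (S n - 1)%nat with n by lia.
    rewrite (prodR_ext n (fun i => if Nat.eqb i n then 1 else w i / N) (fun i => w i / N)).
    rewrite (prodR_ext n (fun i => if Nat.eqb i n then 1 else w i) w).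
    rewrite <- (prodR_div n w N HN). lra.
    all: intros i Hi; destruct (Nat.eqb_spec i n); [lia|auto].
  - destruct (Nat.eqb_spec n k); [lia|]. replace (S n - 1)%nat with (S (n - 1)) by lia. simpl pow.
    rewrite <- (IHn ltac:(lia) HN). field. auto. Qed.

Lemma prodR_zero n : (0 < n)%nat -> prodR n (fun _ => 0) = 0.
Proof. destruct n; intros; [lia|]. simpl; lra. Qed.

Lemma sum_f_sumR f m : sum_f_R0 f m = sumR (S m) f.
Proof. induction m; simpl. lra. rewrite IHm. simpl. lra. Qed.

Lemma partial_le_limit f l K : (forall i, 0 <= f i) -> infinite_sum f l -> sumR K f <= l.
Proof. intros Hf Hs. destruct (Rle_dec (sumR K f) l) as [|Hn]; auto. exfalso.
  destruct (Hs (sumR K f - l) ltac:(lra)) as [N HN]. specialize (HN (N + K)%nat ltac:(lia)).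
  rewrite sum_f_sumR in HN. unfold Rdist in HN.
  assert (sumR K f <= sumR (S (N + K)) f) by (apply sumR_mono_len; auto; lia).
  apply Rabs_def2 in HN. lra. Qed.

Lemma series_bound f B : (forall i, 0 <= f i) -> (forall K, sumR K f <= B) ->
  exists L, infinite_sum f L /\ L <= B.
Proof. intros Hf HB.
  destruct (growing_cv (fun m => sumR (S m) f)) as [L HL].
  - intros m. simpl. specialize (Hf (S m)). simpl in Hf. lra.
  - exists B. intros y [m ->]. apply HB.
  - exists L. assert (Hs : infinite_sum f L).
    { intros e He. destruct (HL e He) as [N HN]. exists N. intros m Hm. rewrite sum_f_sumR. apply HN; auto. }
    split; auto. destruct (Rle_dec L B) as [|Hn]; auto. exfalso.
    destruct (HL (L - B) ltac:(lra)) as [N HN]. specialize (HN N (le_n _)). unfold Rdist in HN.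
    specialize (HB (S N)). apply Rabs_def2 in HN. lra. Qed.

Lemma series_bound2 f g B : (forall i, 0 <= f i) -> (forall i, 0 <= g i) ->
  (forall K, sumR K f + sumR K g <= B) ->
  exists L1 L2, infinite_sum f L1 /\ infinite_sum g L2 /\ L1 + L2 <= B.
Proof. intros Hf Hg HB.
  assert (HB1 : forall K, sumR K f <= B) by (intros K; specialize (HB K); assert (0 <= sumR K g) by (apply sumR_nonneg; auto); lra).
  assert (HB2 : forall K, sumR K g <= B) by (intros K; specialize (HB K); assert (0 <= sumR K f) by (apply sumR_nonneg; auto); lra).
  destruct (series_bound f B Hf HB1) as [L1 [H1 _]].
  destruct (series_bound g B Hg HB2) as [L2 [H2 _]].
  exists L1, L2. split; auto. split; auto.
  destruct (series_bound (fun i => f i + g i) B) as [L [HL HLB]].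
  - intros i; specialize (Hf i); specialize (Hg i); lra.
  - intros K. rewrite sumR_plus. apply HB.
  - assert (infinite_sum (fun i => f i + g i) (L1 + L2)).
    { intros e He. destruct (H1 (e/2) ltac:(lra)) as [N1 HN1]. destruct (H2 (e/2) ltac:(lra)) as [N2 HN2].
      exists (N1 + N2)%nat. intros m Hm. specialize (HN1 m ltac:(lia)). specialize (HN2 m ltac:(lia)).
      rewrite sum_f_sumR in *. rewrite sumR_plus. unfold Rdist in *.
      apply Rabs_def2 in HN1. apply Rabs_def2 in HN2. apply Rabs_def1; lra. }
    rewrite (uniqueness_sum _ _ _ H HL). auto. Qed.

Definition bnd n (S : (nat -> R) -> Prop) := exists M, forall x, S x -> forall i, (i < n)%nat -> Rabs (x i) <= M.
Definition OM n (S : (nat -> R) -> Prop) : R := epsilon (inhabits 0) (fun v => is_volume n S v).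

Lemma abs_le_inv x M : Rabs x <= M -> - M <= x <= M.
Proof. unfold Rabs; destruct (Rcase_abs x); intros; lra. Qed.

Lemma bnd_sub n S T : bnd n S -> (forall x, T x -> S x) -> bnd n T.
Proof. intros [M HM] H. exists M. intros x Hx. apply HM, H, Hx. Qed.

Lemma box_vol_nonneg n a b : (forall i, (i < n)%nat -> a i <= b i) -> 0 <= box_vol n a b.
Proof. intros H. unfold box_vol. apply prodR_nonneg. intros i Hi; specialize (H i Hi); lra. Qed.

Lemma cover_nonneg n S s : box_cover_sum n S s -> 0 <= s.
Proof. intros [a [b [Hv [_ Hs]]]]. apply (partial_le_limit _ _ 0) in Hs. simpl in Hs; auto.
  intros j; apply box_vol_nonneg; auto. Qed.

Lemma inf_sum_ext f g l : infinite_sum f l -> (forall j, f j = g j) -> infinite_sum g l.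
Proof. intros H E. replace g with f; auto. extensionality j; auto. Qed.

Lemma inf_sum_first V : infinite_sum (fun j => if Nat.eqb j 0 then V else 0) V.
Proof. intros e He. exists 0%nat. intros m _. rewrite sum_f_sumR. unfold Rdist.
  replace (sumR (S m) (fun j => if Nat.eqb j 0 then V else 0)) with V. rewrite Rminus_diag, Rabs_R0; lra.
  induction m. simpl; lra. simpl sumR in *. rewrite <- IHm. simpl. lra. Qed.

Lemma cover_exists n S : (0 < n)%nat -> bnd n S -> exists s, box_cover_sum n S s.
Proof. intros Hn [M HM].
  exists (box_vol n (fun _ => - Rabs M) (fun _ => Rabs M)).
  exists (fun j => if Nat.eqb j 0 then (fun _ => - Rabs M) else (fun _ => 0)).
  exists (fun j => if Nat.eqb j 0 then (fun _ => Rabs M) else (fun _ => 0)).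
  split; [|split].
  - intros j i _. destruct (Nat.eqb j 0). pose proof (Rabs_pos M); lra. lra.
  - intros x Hx. exists 0%nat. simpl. intros i Hi. specialize (HM x Hx i Hi).
    pose proof (Rle_abs M). apply abs_le_inv in HM. lra.
  - eapply inf_sum_ext. apply inf_sum_first. intros j. unfold box_vol. destruct (Nat.eqb j 0); auto.
    rewrite <- (prodR_zero n Hn) at 1. apply prodR_ext; intros; lra. Qed.

Lemma vol_exists n S : (0 < n)%nat -> bnd n S -> is_volume n S (OM n S).
Proof. intros Hn Hb. unfold OM. apply epsilon_spec.
  destruct (cover_exists n S Hn Hb) as [s0 Hs0].
  destruct (completeness (fun y => exists s, box_cover_sum n S s /\ y = - s)) as [m [Hub Hlub]].
  - exists 0. intros y [s [Hs ->]]. pose proof (cover_nonneg _ _ _ Hs). lra.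
  - exists (- s0). eauto.
  - exists (- m). split.
    + intros s Hs. assert (- s <= m) by (apply Hub; eauto). lra.
    + intros w Hw. assert (m <= - w). { apply Hlub. intros y [s [Hs ->]]. specialize (Hw s Hs). lra. } lra. Qed.

Lemma OM_le n S s : (0 < n)%nat -> bnd n S -> box_cover_sum n S s -> OM n S <= s.
Proof. intros Hn Hb Hs. apply (proj1 (vol_exists n S Hn Hb)); auto. Qed.

Lemma OM_lower n S w : (0 < n)%nat -> bnd n S -> (forall s, box_cover_sum n S s -> w <= s) -> w <= OM n S.
Proof. intros Hn Hb H. apply (proj2 (vol_exists n S Hn Hb)); auto. Qed.

Lemma OM_approx n S e : (0 < n)%nat -> bnd n S -> 0 < e -> exists s, box_cover_sum n S s /\ s < OM n S + e.
Proof. intros Hn Hb He. destruct (classic (exists s, box_cover_sum n S s /\ s < OM n S + e)) as [|Hno]; auto.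
  exfalso. assert (OM n S + e <= OM n S); [|lra]. apply OM_lower; auto.
  intros s Hs. destruct (Rle_dec (OM n S + e) s); auto. exfalso; apply Hno; exists s; split; auto; lra. Qed.

Lemma le_eps a b : (forall e, 0 < e -> a <= b + e) -> a <= b.
Proof. intros H. destruct (Rle_dec a b); auto. specialize (H ((a - b)/2) ltac:(lra)). lra. Qed.

Lemma OM_transfer n S T : (0 < n)%nat -> bnd n S -> bnd n T ->
  (forall s, box_cover_sum n S s -> forall e, 0 < e -> exists s', box_cover_sum n T s' /\ s' <= s + e) ->
  OM n T <= OM n S.
Proof. intros Hn HS HT H. apply le_eps. intros e He.
  destruct (OM_approx n S (e/2) Hn HS ltac:(lra)) as [s [Hs Hse]].
  destruct (H s Hs (e/2) ltac:(lra)) as [s' [Hs' Hle]].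
  pose proof (OM_le n T s' Hn HT Hs'). lra. Qed.

Lemma OM_mono n S T : (0 < n)%nat -> bnd n S -> (forall x, T x -> S x) -> OM n T <= OM n S.
Proof. intros Hn HS Hsub. apply OM_transfer; auto. eapply bnd_sub; eauto.
  intros s [a [b [Hv [Hc Hsum]]]] e He. exists s. split; [|lra].
  exists a, b. split; [exact Hv|split; [|exact Hsum]]. intros x Hx; apply Hc, Hsub, Hx. Qed.

Lemma OM_ext n S T : (forall x, S x <-> T x) -> OM n S = OM n T.
Proof. intros H. replace T with S; auto. extensionality x. apply propositional_extensionality; auto. Qed.

Lemma block_cover n S T (A B : nat -> nat -> nat -> R) bound : (T <> 0)%nat ->
  (forall j m i, (i < n)%nat -> A j m i <= B j m i) ->
  (forall x, S x -> exists j m, (m < T)%nat /\ in_box n (A j m) (B j m) x) ->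
  (forall J, sumR J (fun j => sumR T (fun m => box_vol n (A j m) (B j m))) <= bound) ->
  exists s, box_cover_sum n S s /\ s <= bound.
Proof. intros HT Hv Hc Hb.
  set (h := fun k => box_vol n (A (k / T)%nat (k mod T)%nat) (B (k / T)%nat (k mod T)%nat)).
  destruct (series_bound h bound) as [L [HL HLb]].
  - intros k; apply box_vol_nonneg; auto.
  - intros K. apply Rle_trans with (sumR (K * T) h).
    apply sumR_mono_len. intros k; apply box_vol_nonneg; auto. destruct T; lia.
    unfold h. rewrite (sumR_block K T (fun j m => box_vol n (A j m) (B j m)) HT). apply Hb.
  - exists L. split; auto. exists (fun k => A (k / T)%nat (k mod T)%nat), (fun k => B (k / T)%nat (k mod T)%nat).
    split; [intros; auto|split; [|exact HL]].
    intros x Hx. destruct (Hc x Hx) as [j [m [Hm Hin]]]. exists (j * T + m)%nat.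
    rewrite block_div, block_mod; auto. Qed.

Lemma block_cover2 n S1 S2 T (A1 B1 A2 B2 : nat -> nat -> nat -> R) bound : (T <> 0)%nat ->
  (forall j m i, (i < n)%nat -> A1 j m i <= B1 j m i) ->
  (forall j m i, (i < n)%nat -> A2 j m i <= B2 j m i) ->
  (forall x, S1 x -> exists j m, (m < T)%nat /\ in_box n (A1 j m) (B1 j m) x) ->
  (forall x, S2 x -> exists j m, (m < T)%nat /\ in_box n (A2 j m) (B2 j m) x) ->
  (forall J, sumR J (fun j => sumR T (fun m => box_vol n (A1 j m) (B1 j m) + box_vol n (A2 j m) (B2 j m))) <= bound) ->
  exists s1 s2, box_cover_sum n S1 s1 /\ box_cover_sum n S2 s2 /\ s1 + s2 <= bound.
Proof. intros HT Hv1 Hv2 Hc1 Hc2 Hb.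
  set (h1 := fun k => box_vol n (A1 (k / T)%nat (k mod T)%nat) (B1 (k / T)%nat (k mod T)%nat)).
  set (h2 := fun k => box_vol n (A2 (k / T)%nat (k mod T)%nat) (B2 (k / T)%nat (k mod T)%nat)).
  destruct (series_bound2 h1 h2 bound) as [L1 [L2 [HL1 [HL2 HLb]]]].
  - intros k; apply box_vol_nonneg; auto.
  - intros k; apply box_vol_nonneg; auto.
  - intros K. rewrite <- sumR_plus. apply Rle_trans with (sumR (K * T) (fun i => h1 i + h2 i)).
    apply sumR_mono_len. intros k; apply Rplus_le_le_0_compat; apply box_vol_nonneg; auto. destruct T; lia.
    unfold h1, h2. rewrite (sumR_block K T (fun j m => box_vol n (A1 j m) (B1 j m) + box_vol n (A2 j m) (B2 j m)) HT). apply Hb.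
  - exists L1, L2. split; [|split; auto].
    + exists (fun k => A1 (k / T)%nat (k mod T)%nat), (fun k => B1 (k / T)%nat (k mod T)%nat).
      split; [intros; auto|split; [|exact HL1]].
      intros x Hx. destruct (Hc1 x Hx) as [j [m [Hm Hin]]]. exists (j * T + m)%nat.
      rewrite block_div, block_mod; auto.
    + exists (fun k => A2 (k / T)%nat (k mod T)%nat), (fun k => B2 (k / T)%nat (k mod T)%nat).
      split; [intros; auto|split; [|exact HL2]].
      intros x Hx. destruct (Hc2 x Hx) as [j [m [Hm Hin]]]. exists (j * T + m)%nat.
      rewrite block_div, block_mod; auto. Qed.

Lemma OM_subadd n A B : (0 < n)%nat -> bnd n A -> bnd n B ->
  OM n (fun x => A x \/ B x) <= OM n A + OM n B.
Proof. intros Hn HA HB. assert (HU : bnd n (fun x => A x \/ B x)).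
  { destruct HA as [M1 H1], HB as [M2 H2]. exists (Rmax M1 M2). intros x [Hx|Hx] i Hi.
    apply Rle_trans with M1; [apply H1; auto| apply Rmax_l]. apply Rle_trans with M2; [apply H2; auto| apply Rmax_r]. }
  apply le_eps. intros e He.
  destruct (OM_approx n A (e/2) Hn HA ltac:(lra)) as [sA [[a1 [b1 [Hv1 [Hc1 Hs1]]]] HsA]].
  destruct (OM_approx n B (e/2) Hn HB ltac:(lra)) as [sB [[a2 [b2 [Hv2 [Hc2 Hs2]]]] HsB]].
  destruct (block_cover n (fun x => A x \/ B x) 2 (fun j m => if Nat.eqb m 0 then a1 j else a2 j)
    (fun j m => if Nat.eqb m 0 then b1 j else b2 j) (sA + sB)) as [s [Hs Hsb]].
  - lia.
  - intros j m i Hi. destruct (Nat.eqb m 0); auto.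
  - intros x [Hx|Hx]. destruct (Hc1 x Hx) as [j Hj]. exists j, 0%nat. split; auto.
    destruct (Hc2 x Hx) as [j Hj]. exists j, 1%nat. split; auto.
  - intros J. simpl. rewrite sumR_plus.
    pose proof (partial_le_limit _ _ J (fun j => box_vol_nonneg _ _ _ (Hv1 j)) Hs1).
    pose proof (partial_le_limit _ _ J (fun j => box_vol_nonneg _ _ _ (Hv2 j)) Hs2).
    replace (sumR J (fun j => 0 + box_vol n (a1 j) (b1 j))) with (sumR J (fun j => box_vol n (a1 j) (b1 j))). lra.
    apply sumR_ext; intros; lra.
  - pose proof (OM_le n _ s Hn HU Hs). lra. Qed.

Lemma box_vol_k n k a b : (k < n)%nat ->
  box_vol n a b = (b k - a k) * prodR n (fun i => if Nat.eqb i k then 1 else b i - a i).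
Proof. intros Hk. unfold box_vol. rewrite <- prodR_lin by auto. apply prodR_ext.
  intros i Hi. destruct (Nat.eqb_spec i k); subst; auto. Qed.

Lemma prod_other_eq n k a b a' b' : (forall i, (i < n)%nat -> i <> k -> a' i = a i /\ b' i = b i) ->
  prodR n (fun i => if Nat.eqb i k then 1 else b' i - a' i) = prodR n (fun i => if Nat.eqb i k then 1 else b i - a i).
Proof. intros H. apply prodR_ext. intros i Hi. destruct (Nat.eqb_spec i k); auto.
  destruct (H i Hi n0) as [-> ->]; auto. Qed.

Definition clip (lo hi x : R) := Rmax lo (Rmin hi x).
Ltac dd := repeat (match goal with |- context[Rmin ?a ?b] => destruct (Rle_dec a b); [rewrite (Rmin_left a b) by lra | rewrite (Rmin_right a b) by lra] end);
  repeat (match goal with |- context[Rmax ?a ?b] => destruct (Rle_dec a b); [rewrite (Rmax_right a b) by lra | rewrite (Rmax_left a b) by lra] end).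
Lemma clip_bounds lo hi x : lo <= hi -> lo <= clip lo hi x <= hi.
Proof. unfold clip. intros. dd; lra. Qed.
Lemma clip_id lo hi x : lo <= x <= hi -> clip lo hi x = x.
Proof. unfold clip. intros. dd; lra. Qed.
Lemma clip_mono lo hi x y : x <= y -> clip lo hi x <= clip lo hi y.
Proof. unfold clip. intros. dd; lra. Qed.
Lemma clip_lip lo hi x y : lo <= hi -> x <= y -> clip lo hi y - clip lo hi x <= y - x.
Proof. unfold clip. intros. dd; lra. Qed.

Lemma OM_split n k t E : (0 < n)%nat -> (k < n)%nat -> bnd n E ->
  OM n (fun x => E x /\ x k <= t) + OM n (fun x => E x /\ t <= x k) <= OM n E.
Proof. intros Hn Hk HE. apply le_eps. intros e He.
  destruct (OM_approx n E e Hn HE He) as [s [[a [b [Hv [Hc Hs]]]] Hse]].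
  set (tau := fun j => clip (a j k) (b j k) t).
  destruct (block_cover2 n (fun x => E x /\ x k <= t) (fun x => E x /\ t <= x k) 1
     (fun j _ => a j) (fun j _ i => if Nat.eqb i k then tau j else b j i)
     (fun j _ i => if Nat.eqb i k then tau j else a j i) (fun j _ => b j) s) as [s1 [s2 [H1 [H2 H12]]]].
  - lia.
  - intros j m i Hi. destruct (Nat.eqb_spec i k). subst. apply clip_bounds; auto. auto.
  - intros j m i Hi. destruct (Nat.eqb_spec i k). subst. apply clip_bounds; auto. auto.
  - intros x [Hx Hxt]. destruct (Hc x Hx) as [j Hj]. exists j, 0%nat. split; [lia|].
    intros i Hi. destruct (Nat.eqb_spec i k); auto. subst. split. apply Hj; auto.
    specialize (Hj k Hi). unfold tau. rewrite <- (clip_id (a j k) (b j k) (x k)) by lra.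
    apply clip_mono; auto.
  - intros x [Hx Hxt]. destruct (Hc x Hx) as [j Hj]. exists j, 0%nat. split; [lia|].
    intros i Hi. destruct (Nat.eqb_spec i k); auto. subst. split; [|apply Hj; auto].
    specialize (Hj k Hi). unfold tau. rewrite <- (clip_id (a j k) (b j k) (x k)) by lra.
    apply clip_mono; auto.
  - intros J. simpl. apply Rle_trans with (sumR J (fun j => box_vol n (a j) (b j))).
    + apply Req_le, sumR_ext. intros j _. rewrite !(box_vol_k n k) by auto. rewrite !Nat.eqb_refl.
      set (P := prodR n (fun i => if Nat.eqb i k then 1 else b j i - a j i)).
      replace (prodR n (fun i => if Nat.eqb i k then 1 else (if Nat.eqb i k then tau j else b j i) - a j i)) with P.
      replace (prodR n (fun i => if Nat.eqb i k then 1 else b j i - (if Nat.eqb i k then tau j else a j i))) with P. lra.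
      all: apply prodR_ext; intros i _; destruct (Nat.eqb i k); auto.
    + apply partial_le_limit; auto. intros j; apply box_vol_nonneg; auto.
  - assert (bnd n (fun x => E x /\ x k <= t)) by (eapply bnd_sub; [exact HE|]; intros x [Hx _]; exact Hx).
    assert (bnd n (fun x => E x /\ t <= x k)) by (eapply bnd_sub; [exact HE|]; intros x [Hx _]; exact Hx).
    pose proof (OM_le n _ _ Hn H H1). pose proof (OM_le n _ _ Hn H0 H2). lra. Qed.

Definition refl (k : nat) (t : R) (x : nat -> R) : nat -> R := fun i => if Nat.eqb i k then t - x i else x i.

Lemma refl_invol k t x : refl k t (refl k t x) = x.
Proof. extensionality i. unfold refl. destruct (Nat.eqb i k); lra. Qed.

Ltac absc := repeat match goal with |- context[Rabs ?a] => unfold Rabs at 1; destruct (Rcase_abs a) end.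
Lemma abs3 a b : Rabs a <= Rabs b + Rabs (b - a).
Proof. absc; lra. Qed.

Lemma bnd_refl n k t S : bnd n S -> bnd n (fun x => S (refl k t x)).
Proof. intros [M HM]. exists (M + Rabs t). intros x Hx i Hi. specialize (HM _ Hx i Hi). unfold refl in HM.
  destruct (Nat.eqb i k). pose proof (abs3 (x i) t). lra.
  pose proof (Rabs_pos t). lra. Qed.

Lemma OM_refl_le n k t S : (0 < n)%nat -> bnd n S -> OM n (fun x => S (refl k t x)) <= OM n S.
Proof. intros Hn HS. apply OM_transfer; auto. apply bnd_refl; auto.
  intros s [a [b [Hv [Hc Hs]]]] e He. exists s. split; [|lra].
  exists (fun j i => if Nat.eqb i k then t - b j i else a j i), (fun j i => if Nat.eqb i k then t - a j i else b j i).
  split; [|split].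
  - intros j i Hi. specialize (Hv j i Hi). destruct (Nat.eqb i k); lra.
  - intros x Hx. destruct (Hc _ Hx) as [j Hj]. exists j. intros i Hi. specialize (Hj i Hi). unfold refl in Hj.
    destruct (Nat.eqb i k); lra.
  - eapply inf_sum_ext. exact Hs. intros j. unfold box_vol. apply prodR_ext. intros i _. destruct (Nat.eqb i k); lra. Qed.

Lemma OM_refl n k t S : (0 < n)%nat -> bnd n S -> OM n (fun x => S (refl k t x)) = OM n S.
Proof. intros Hn HS. apply Rle_antisym. apply OM_refl_le; auto.
  pose proof (OM_refl_le n k t (fun x => S (refl k t x)) Hn (bnd_refl n k t S HS)).
  cbv beta in H. rewrite (OM_ext n (fun x => S (refl k t (refl k t x))) S) in H; auto.
  intros x; rewrite refl_invol; tauto. Qed.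

Definition Meas n (M : (nat -> R) -> Prop) := forall E, bnd n E ->
  OM n (fun x => E x /\ M x) + OM n (fun x => E x /\ ~ M x) <= OM n E.

Lemma Meas_ext n M M' : (forall x, M x <-> M' x) -> Meas n M -> Meas n M'.
Proof. intros H HM E HE.
  rewrite (OM_ext n (fun x => E x /\ M' x) (fun x => E x /\ M x)) by (intros x; rewrite (H x); tauto).
  rewrite (OM_ext n (fun x => E x /\ ~ M' x) (fun x => E x /\ ~ M x)) by (intros x; rewrite (H x); tauto).
  apply HM; auto. Qed.

Lemma Meas_half n k t : (0 < n)%nat -> (k < n)%nat -> Meas n (fun x => x k <= t).
Proof. intros Hn Hk E HE. pose proof (OM_split n k t E Hn Hk HE).
  assert (OM n (fun x => E x /\ ~ x k <= t) <= OM n (fun x => E x /\ t <= x k)).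
  { apply OM_mono; auto. eapply bnd_sub; [exact HE|]; intros x [Hx _]; exact Hx. intros x [Hx Hy]; split; auto; lra. }
  lra. Qed.

Lemma Meas_inter n A B : (0 < n)%nat -> Meas n A -> Meas n B -> Meas n (fun x => A x /\ B x).
Proof. intros Hn HA HB E HE.
  assert (HEA : bnd n (fun x => E x /\ A x)) by (eapply bnd_sub; [exact HE|]; intros x [Hx _]; exact Hx).
  pose proof (HA E HE). pose proof (HB _ HEA).
  rewrite (OM_ext n (fun x => E x /\ A x /\ B x) (fun x => (E x /\ A x) /\ B x)) by tauto.
  assert (OM n (fun x => E x /\ ~ (A x /\ B x)) <= OM n (fun x => (E x /\ A x) /\ ~ B x) + OM n (fun x => E x /\ ~ A x)).
  { eapply Rle_trans; [|apply OM_subadd; auto]. apply OM_mono; auto.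
    - destruct HE as [M HM]. exists M. intros x [[[Hx _] _]|[Hx _]]; auto.
    - intros x [Hx Hn']. destruct (classic (A x)); [left|right]; tauto.
    - eapply bnd_sub; [exact HEA|]; intros x [Hx _]; exact Hx.
    - eapply bnd_sub; [exact HE|]; intros x [Hx _]; exact Hx. }
  lra. Qed.

Lemma incl_excl n P Q : (0 < n)%nat -> Meas n Q -> bnd n P -> bnd n Q ->
  OM n P + OM n Q <= OM n (fun x => P x \/ Q x) + OM n (fun x => P x /\ Q x).
Proof. intros Hn HQ HP HQb.
  assert (HU : bnd n (fun x => P x \/ Q x)).
  { destruct HP as [M1 H1], HQb as [M2 H2]. exists (Rmax M1 M2). intros x [Hx|Hx] i Hi.
    apply Rle_trans with M1; [apply H1; auto| apply Rmax_l]. apply Rle_trans with M2; [apply H2; auto| apply Rmax_r]. }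
  assert (H : OM n P <= OM n (fun x => P x /\ Q x) + OM n (fun x => P x /\ ~ Q x)).
  { eapply Rle_trans; [|apply OM_subadd; auto]. apply OM_mono; auto.
    - destruct HP as [M HM]. exists M. intros x [[Hx _]|[Hx _]]; auto.
    - intros x Hx. destruct (classic (Q x)); tauto.
    - eapply bnd_sub; [exact HP|]; intros x [Hx _]; exact Hx.
    - eapply bnd_sub; [exact HP|]; intros x [Hx _]; exact Hx. }
  pose proof (HQ _ HU) as H0. cbv beta in H0.
  rewrite (OM_ext n (fun x => (P x \/ Q x) /\ Q x) Q) in H0 by tauto.
  rewrite (OM_ext n (fun x => (P x \/ Q x) /\ ~ Q x) (fun x => P x /\ ~ Q x)) in H0 by tauto.
  lra. Qed.

Fixpoint dig (N p m : nat) : nat := match p with O => (m mod N)%nat | S p' => dig N p' (m / N)%nat end.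

Lemma dig_enc N : (0 < N)%nat -> forall L (P : nat -> nat -> Prop),
  (forall p, (p < L)%nat -> exists d, (d < N)%nat /\ P p d) ->
  exists m, (m < N ^ L)%nat /\ forall p, (p < L)%nat -> P p (dig N p m).
Proof. intros HN L. induction L; intros P HP.
  - exists 0%nat. simpl. split; [lia|]. intros; lia.
  - destruct (HP 0%nat ltac:(lia)) as [d0 [Hd0 Pd0]].
    destruct (IHL (fun p d => P (S p) d)) as [m [Hm Pm]]. intros p Hp. apply HP; lia.
    exists (d0 + m * N)%nat. split.
    + simpl. assert (m <= N ^ L - 1)%nat by lia. assert (1 <= N ^ L)%nat by lia. nia.
    + intros p Hp. destruct p; simpl.
      * rewrite Nat.Div0.mod_add, Nat.mod_small; auto.
      * rewrite Nat.div_add by lia. rewrite Nat.div_small by auto. simpl. apply Pm. lia. Qed.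

Lemma digit_exists N h y : (0 < N)%nat -> 0 <= h -> 0 <= y <= INR N * h ->
  exists e, (e < N)%nat /\ INR e * h <= y <= INR (S e) * h.
Proof. intros HN Hh. induction N; [lia|]. intros Hy. destruct (Nat.eq_dec N 0).
  - subst. exists 0%nat. split; [lia|]. simpl in *. lra.
  - destruct (Rle_dec y (INR N * h)).
    + destruct IHN as [e [He He']]; [lia|lra|]. exists e; split; auto.
    + exists N. split; [lia|]. lra. Qed.

Definition pos k i := if Nat.ltb i k then i else (i - 1)%nat.
Definition qpos k p := if Nat.ltb p k then p else S p.

Lemma pos_q n k i : (k < n)%nat -> (i < n)%nat -> i <> k -> (pos k i < n - 1)%nat /\ qpos k (pos k i) = i.
Proof. intros. unfold pos, qpos. destruct (Nat.ltb_spec i k); [destruct (Nat.ltb_spec i k)|destruct (Nat.ltb_spec (i-1) k)]; split; lia. Qed.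

Lemma q_pos n k p : (k < n)%nat -> (p < n - 1)%nat -> (qpos k p < n)%nat /\ qpos k p <> k.
Proof. intros. unfold qpos. destruct (Nat.ltb_spec p k); lia. Qed.

Fixpoint amax (w : nat -> R) (n : nat) : nat :=
  match n with O => O | S m => let a := amax w m in if Rle_dec (w m) (w a) then a else m end.

Lemma amax_spec w m : (amax w (S m) < S m)%nat /\ forall i, (i <= m)%nat -> w i <= w (amax w (S m)).
Proof. induction m.
  - simpl. destruct (Rle_dec (w 0%nat) (w 0%nat)); split; try lia; intros i Hi; replace i with 0%nat by lia; lra.
  - destruct IHm as [H1 H2]. remember (S m) as m'. simpl. subst m'. set (a := amax w (S m)) in *.
    destruct (Rle_dec (w (S m)) (w a)).
    + split; [lia|]. intros i Hi. destruct (Nat.eq_dec i (S m)); [subst; auto| apply H2; lia].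
    + split; [lia|]. intros i Hi. destruct (Nat.eq_dec i (S m)); [subst; lra|].
      specialize (H2 i ltac:(lia)). lra. Qed.

Lemma sum_except_le n k M g : (k < n)%nat -> 0 <= M -> (forall i, (i < n)%nat -> g i <= M) ->
  sumR n (fun i => if Nat.eqb i k then 0 else g i) <= INR (n - 1) * M.
Proof. intros Hk HM Hg. pose proof (sumR_split n k (fun i => if Nat.eqb i k then M else g i) Hk) as E.
  cbv beta in E. rewrite Nat.eqb_refl in E.
  replace (sumR n (fun i => if Nat.eqb i k then 0 else if Nat.eqb i k then M else g i))
    with (sumR n (fun i => if Nat.eqb i k then 0 else g i)) in E by (apply sumR_ext; intros i _; destruct (Nat.eqb i k); auto).
  assert (sumR n (fun i => if Nat.eqb i k then M else g i) <= INR n * M).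
  { rewrite <- sumR_const. apply sumR_le. intros i Hi. destruct (Nat.eqb i k); auto; lra. }
  rewrite minus_INR by lia. simpl INR. lra. Qed.

Lemma sum_except_diff n k u v w : (forall i, (i < n)%nat -> i <> k -> u i <= v i + w i) ->
  sumR n (fun i => if Nat.eqb i k then 0 else u i) <=
  sumR n (fun i => if Nat.eqb i k then 0 else v i) + sumR n (fun i => if Nat.eqb i k then 0 else w i).
Proof. intros H. rewrite <- sumR_plus. apply sumR_le. intros i Hi. destruct (Nat.eqb_spec i k). lra. apply H; auto. Qed.

Definition hh N (a b : nat -> R) i := (b i - a i) / INR N.
Definition pc N k (a b : nat -> R) m i := a i + INR (dig N (pos k i) m) * hh N a b i.
Definition HH n N k a b := sumR n (fun i => if Nat.eqb i k then 0 else hh N a b i).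
Definition SPc n N k a b (c : nat -> R) m := sumR n (fun i => if Nat.eqb i k then 0 else Rabs (pc N k a b m i - c i)).
Definition Rpc n N k a b c rho m := Rmax (rho - SPc n N k a b c m + HH n N k a b) 0.
Definition rrc n N k a b c rho m := Rpc n N k a b c rho m - 2 * HH n N k a b.
Definition lo_s n N k (a b c : nat -> R) rho m s :=
  match s with
  | O => clip (a k) (b k) (c k - Rpc n N k a b c rho m)
  | 1%nat => a k
  | _ => clip (a k) (b k) (c k + rrc n N k a b c rho m) end.
Definition hi_s n N k (a b c : nat -> R) rho m s :=
  match s with
  | O => clip (a k) (b k) (c k + Rpc n N k a b c rho m)
  | 1%nat => clip (a k) (b k) (c k - rrc n N k a b c rho m)
  | _ => b k end.
Definition cA n N k a b c rho m s := fun i => if Nat.eqb i k then lo_s n N k a b c rho m s else pc N k a b m i.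
Definition cB n N k a b c rho m s := fun i => if Nat.eqb i k then hi_s n N k a b c rho m s else pc N k a b m i + hh N a b i.

Lemma hh_nonneg N a b i : (0 < N)%nat -> a i <= b i -> 0 <= hh N a b i.
Proof. intros HN H. unfold hh. unfold Rdiv. apply Rmult_le_pos. lra. left; apply Rinv_0_lt_compat, lt_0_INR; auto. Qed.

Lemma HH_nonneg n N k a b : (0 < N)%nat -> (forall i, (i < n)%nat -> a i <= b i) -> 0 <= HH n N k a b.
Proof. intros HN H. unfold HH. apply sumR_nonneg. intros i Hi. destruct (Nat.eqb i k). lra. apply hh_nonneg; auto. Qed.

Lemma cell_valid n N k a b c rho m s : (0 < N)%nat -> (k < n)%nat -> (forall i, (i < n)%nat -> a i <= b i) ->
  forall i, (i < n)%nat -> cA n N k a b c rho m s i <= cB n N k a b c rho m s i.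
Proof. intros HN Hk Hv i Hi. unfold cA, cB. destruct (Nat.eqb_spec i k).
  - subst. pose proof (Hv k Hk). pose proof (HH_nonneg n N k a b HN Hv).
    assert (0 <= Rpc n N k a b c rho m) by (unfold Rpc; apply Rmax_r).
    destruct s as [|[|s]]; simpl.
    + apply clip_mono; lra.
    + apply clip_bounds; auto.
    + apply clip_bounds; auto.
  - pose proof (hh_nonneg N a b i HN (Hv i Hi)). lra. Qed.

Lemma cell_cover n N k a b x : (0 < N)%nat -> (k < n)%nat -> (forall i, (i < n)%nat -> a i <= x i <= b i) ->
  exists m, (m < N ^ (n - 1))%nat /\ forall i, (i < n)%nat -> i <> k -> pc N k a b m i <= x i <= pc N k a b m i + hh N a b i.
Proof. intros HN Hk Hx.
  destruct (dig_enc N HN (n - 1) (fun p d => INR d * hh N a b (qpos k p) <= x (qpos k p) - a (qpos k p) <= INR (S d) * hh N a b (qpos k p))) as [m [Hm Pm]].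
  - intros p Hp. destruct (q_pos n k p Hk Hp) as [Hq _]. specialize (Hx _ Hq).
    apply digit_exists; auto. apply hh_nonneg; auto; lra.
    unfold hh. split. lra. field_simplify. lra. apply not_0_INR; lia.
  - exists m. split; auto. intros i Hi Hik. destruct (pos_q n k i Hk Hi Hik) as [Hp Hq].
    specialize (Pm _ Hp). rewrite Hq in Pm. unfold pc. rewrite S_INR in Pm. lra. Qed.

Lemma absA p x c h : p <= x <= p + h -> Rabs (p - c) <= Rabs (x - c) + h.
Proof. intros. absc; lra. Qed.
Lemma absB p x c h : p <= x <= p + h -> Rabs (x - c) <= Rabs (p - c) + h.
Proof. intros. absc; lra. Qed.

Lemma Sx_bounds n N k a b c m x : (forall i, (i < n)%nat -> i <> k -> pc N k a b m i <= x i <= pc N k a b m i + hh N a b i) ->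
  let Sx := sumR n (fun i => if Nat.eqb i k then 0 else Rabs (x i - c i)) in
  SPc n N k a b c m - HH n N k a b <= Sx <= SPc n N k a b c m + HH n N k a b.
Proof. intros Hc Sx. unfold SPc, HH, Sx. split.
  - pose proof (sum_except_diff n k (fun i => Rabs (pc N k a b m i - c i)) (fun i => Rabs (x i - c i)) (hh N a b)).
    cbv beta in H. assert (H' := H (fun i Hi Hik => absA _ _ _ _ (Hc i Hi Hik))). lra.
  - apply sum_except_diff. intros i Hi Hik. apply absB, Hc; auto. Qed.

Lemma cell_in n N k a b c rho m x : (0 < N)%nat -> (k < n)%nat -> (forall i, (i < n)%nat -> a i <= b i) ->
  (forall i, (i < n)%nat -> a i <= x i <= b i) ->
  (forall i, (i < n)%nat -> i <> k -> pc N k a b m i <= x i <= pc N k a b m i + hh N a b i) ->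
  sumR n (fun i => Rabs (x i - c i)) <= rho ->
  in_box n (cA n N k a b c rho m 0) (cB n N k a b c rho m 0) x.
Proof. intros HN Hk Hv Hx Hc HK i Hi. unfold cA, cB. destruct (Nat.eqb_spec i k); [|apply Hc; auto].
  subst i. simpl. rewrite (sumR_split n k) in HK by auto. cbv beta in HK.
  pose proof (Sx_bounds n N k a b c m x Hc) as [Hs1 Hs2].
  assert (Rabs (x k - c k) <= Rpc n N k a b c rho m).
  { unfold Rpc. eapply Rle_trans; [|apply Rmax_l]. lra. }
  apply abs_le_inv in H. specialize (Hx k Hk).
  rewrite <- (clip_id (a k) (b k) (x k)) by lra. split; apply clip_mono; lra. Qed.

Lemma cell_out n N k a b c rho m x : (0 < N)%nat -> (k < n)%nat -> (forall i, (i < n)%nat -> a i <= b i) ->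
  (forall i, (i < n)%nat -> a i <= x i <= b i) ->
  (forall i, (i < n)%nat -> i <> k -> pc N k a b m i <= x i <= pc N k a b m i + hh N a b i) ->
  ~ sumR n (fun i => Rabs (x i - c i)) <= rho ->
  in_box n (cA n N k a b c rho m 1) (cB n N k a b c rho m 1) x \/
  in_box n (cA n N k a b c rho m 2) (cB n N k a b c rho m 2) x.
Proof. intros HN Hk Hv Hx Hc HK. rewrite (sumR_split n k) in HK by auto. cbv beta in HK.
  pose proof (Sx_bounds n N k a b c m x Hc) as [Hs1 Hs2].
  pose proof (HH_nonneg n N k a b HN Hv).
  assert (Hr : rrc n N k a b c rho m <= Rabs (x k - c k)).
  { unfold rrc, Rpc. destruct (Rle_dec (rho - SPc n N k a b c m + HH n N k a b) 0).
    rewrite Rmax_right by auto. pose proof (Rabs_pos (x k - c k)). lra.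
    rewrite Rmax_left by lra. lra. }
  specialize (Hx k Hk) as Hxk.
  destruct (Rle_dec (x k) (c k)).
  - left. intros i Hi. unfold cA, cB. destruct (Nat.eqb_spec i k); [|apply Hc; auto].
    subst. simpl. rewrite Rabs_left1 in Hr by lra. split; [lra|].
    rewrite <- (clip_id (a k) (b k) (x k)) at 1 by lra. apply clip_mono; lra.
  - right. intros i Hi. unfold cA, cB. destruct (Nat.eqb_spec i k); [|apply Hc; auto].
    subst. simpl. rewrite Rabs_right in Hr by lra. split; [|lra].
    rewrite <- (clip_id (a k) (b k) (x k)) at 1 by lra. apply clip_mono; lra. Qed.

Lemma cell_vol n N k a b c rho m : (0 < N)%nat -> (k < n)%nat -> (forall i, (i < n)%nat -> a i <= b i) ->
  sumR 3 (fun s => box_vol n (cA n N k a b c rho m s) (cB n N k a b c rho m s)) <=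
  (b k - a k + 4 * HH n N k a b) * prodR n (fun i => if Nat.eqb i k then 1 else hh N a b i).
Proof. intros HN Hk Hv.
  assert (Hp : forall s, box_vol n (cA n N k a b c rho m s) (cB n N k a b c rho m s) =
     (hi_s n N k a b c rho m s - lo_s n N k a b c rho m s) * prodR n (fun i => if Nat.eqb i k then 1 else hh N a b i)).
  { intros s. rewrite (box_vol_k n k) by auto. unfold cA, cB. rewrite Nat.eqb_refl. f_equal.
    apply prodR_ext. intros i _. destruct (Nat.eqb i k); lra. }
  simpl sumR. rewrite !Hp.
  assert (0 <= prodR n (fun i => if Nat.eqb i k then 1 else hh N a b i)).
  { apply prodR_nonneg. intros i Hi. destruct (Nat.eqb i k). lra. apply hh_nonneg; auto. }
  pose proof (HH_nonneg n N k a b HN Hv). pose proof (Hv k Hk).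
  assert (0 <= Rpc n N k a b c rho m) by (unfold Rpc; apply Rmax_r).
  unfold hi_s, lo_s, rrc.
  pose proof (clip_lip (a k) (b k) (c k + (Rpc n N k a b c rho m - 2 * HH n N k a b)) (c k + Rpc n N k a b c rho m) ltac:(auto) ltac:(lra)).
  pose proof (clip_lip (a k) (b k) (c k - Rpc n N k a b c rho m) (c k - (Rpc n N k a b c rho m - 2 * HH n N k a b)) ltac:(auto) ltac:(lra)).
  apply Rmult_le_compat_r with (r := prodR n (fun i => if Nat.eqb i k then 1 else hh N a b i)) in H3.
  nra. auto. Qed.

Lemma box_sum n N k a b c rho : (0 < N)%nat -> (k < n)%nat -> (forall i, (i < n)%nat -> a i <= b i) ->
  (forall i, (i < n)%nat -> b i - a i <= b k - a k) ->
  sumR (N ^ (n - 1)) (fun m => sumR 3 (fun s => box_vol n (cA n N k a b c rho m s) (cB n N k a b c rho m s)))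
  <= (1 + 4 * INR (n - 1) / INR N) * box_vol n a b.
Proof. intros HN Hk Hv Hw.
  eapply Rle_trans. apply sumR_le. intros m _. apply (cell_vol n N k a b c rho m HN Hk Hv).
  rewrite sumR_const, pow_INR.
  assert (HNr : INR N <> 0) by (apply not_0_INR; lia).
  assert (HNp : 0 < INR N) by (apply lt_0_INR; lia).
  pose proof (prodR_scale n k (fun i => b i - a i) (INR N) Hk HNr) as Hs. cbv beta in Hs.
  set (P' := prodR n (fun i => if Nat.eqb i k then 1 else hh N a b i)) in *.
  replace (prodR n (fun i => if Nat.eqb i k then 1 else (b i - a i) / INR N)) with P' in Hs by reflexivity.
  set (P'' := prodR n (fun i => if Nat.eqb i k then 1 else b i - a i)) in *.
  rewrite (box_vol_k n k) by auto. fold P''.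
  assert (HP : 0 <= P'') by (apply prodR_nonneg; intros i Hi; destruct (Nat.eqb i k); [lra|specialize (Hv i Hi); lra]).
  assert (HH1 : HH n N k a b <= INR (n - 1) * ((b k - a k) / INR N)).
  { apply sum_except_le; auto. unfold Rdiv. apply Rmult_le_pos. specialize (Hv k Hk); lra. left; apply Rinv_0_lt_compat; auto.
    intros i Hi. unfold hh. unfold Rdiv. apply Rmult_le_compat_r. left; apply Rinv_0_lt_compat; auto. apply Hw; auto. }
  replace (INR N ^ (n - 1) * ((b k - a k + 4 * HH n N k a b) * P')) with ((b k - a k + 4 * HH n N k a b) * P'') by (rewrite <- Hs; ring).
  assert (HH n N k a b * P'' <= INR (n - 1) * ((b k - a k) / INR N) * P'') by (apply Rmult_le_compat_r; auto).
  assert (E : INR (n - 1) * ((b k - a k) / INR N) * P'' = 4 * INR (n - 1) / INR N * ((b k - a k) * P'') / 4) by (field; auto).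
  nra. Qed.

Lemma zb_vol n : (0 < n)%nat -> box_vol n (fun _ => 0) (fun _ => 0) = 0.
Proof. intros Hn. unfold box_vol. rewrite <- (prodR_zero n Hn). apply prodR_ext; intros; lra. Qed.

Lemma Meas_ball n c rho : (0 < n)%nat -> Meas n (fun x => sumR n (fun i => Rabs (x i - c i)) <= rho).
Proof. intros Hn E HE. set (K := fun x => sumR n (fun i => Rabs (x i - c i)) <= rho).
  apply le_eps. intros e He.
  destruct (OM_approx n E (e/2) Hn HE ltac:(lra)) as [s [[a [b [Hv [Hc Hs]]]] Hse]].
  pose proof (cover_nonneg n E s (ex_intro _ a (ex_intro _ b (conj Hv (conj Hc Hs))))) as Hs0.
  destruct (INR_unbounded (8 * INR (n - 1) * s / e)) as [N0 HN0].
  set (N := S N0). assert (HN : (0 < N)%nat) by (unfold N; lia).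
  assert (HNp : 0 < INR N) by (apply lt_0_INR; lia).
  assert (HNN0 : INR N0 < INR N) by (apply lt_INR; unfold N; lia).
  set (delta := 4 * INR (n - 1) / INR N).
  assert (Hd : 0 <= delta) by (unfold delta; unfold Rdiv; apply Rmult_le_pos; [pose proof (pos_INR (n-1)); lra | left; apply Rinv_0_lt_compat; auto]).
  assert (Hds : delta * s <= e / 2).
  { unfold delta. apply Rmult_le_reg_r with (INR N); auto.
    replace (4 * INR (n - 1) / INR N * s * INR N) with (4 * INR (n - 1) * s) by (field; lra).
    assert (8 * INR (n - 1) * s <= INR N * e).
    { apply Rmult_le_reg_r with (/ e). apply Rinv_0_lt_compat; auto.
      replace (INR N * e * / e) with (INR N) by (field; lra). unfold Rdiv in HN0. lra. }
    lra. }
  set (kk := fun j => amax (fun i => b j i - a j i) n).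
  assert (Hkk : forall j, (kk j < n)%nat /\ forall i, (i < n)%nat -> b j i - a j i <= b j (kk j) - a j (kk j)).
  { intros j. pose proof (amax_spec (fun i => b j i - a j i) (n - 1)) as [H1 H2].
    replace (S (n - 1)) with n in * by lia. unfold kk. split; auto. intros i Hi. apply H2; lia. }
  set (zb := fun _ : nat => 0).
  set (A1 := fun j m' => if Nat.eqb (m' mod 3) 0 then cA n N (kk j) (a j) (b j) c rho (m' / 3)%nat 0 else zb).
  set (B1 := fun j m' => if Nat.eqb (m' mod 3) 0 then cB n N (kk j) (a j) (b j) c rho (m' / 3)%nat 0 else zb).
  set (A2 := fun j m' => if Nat.eqb (m' mod 3) 0 then zb else cA n N (kk j) (a j) (b j) c rho (m' / 3)%nat (m' mod 3)).
  set (B2 := fun j m' => if Nat.eqb (m' mod 3) 0 then zb else cB n N (kk j) (a j) (b j) c rho (m' / 3)%nat (m' mod 3)).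
  destruct (block_cover2 n (fun x => E x /\ K x) (fun x => E x /\ ~ K x) (N ^ (n - 1) * 3) A1 B1 A2 B2 ((1 + delta) * s))
    as [s1 [s2 [H1 [H2 H12]]]].
  - assert (0 < N ^ (n - 1))%nat by (apply Nat.neq_0_lt_0, Nat.pow_nonzero; lia). lia.
  - intros j m' i Hi. unfold A1, B1. destruct (Nat.eqb (m' mod 3) 0). apply cell_valid; auto. apply Hkk. unfold zb; lra.
  - intros j m' i Hi. unfold A2, B2. destruct (Nat.eqb (m' mod 3) 0). unfold zb; lra. apply cell_valid; auto. apply Hkk.
  - intros x [Hx HK]. destruct (Hc x Hx) as [j Hj]. destruct (Hkk j) as [Hk Hw].
    destruct (cell_cover n N (kk j) (a j) (b j) x HN Hk Hj) as [m [Hm Hcell]].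
    exists j, (m * 3 + 0)%nat. split; [lia|]. unfold A1, B1. rewrite block_mod, block_div by lia. simpl.
    apply cell_in; auto.
  - intros x [Hx HK]. destruct (Hc x Hx) as [j Hj]. destruct (Hkk j) as [Hk Hw].
    destruct (cell_cover n N (kk j) (a j) (b j) x HN Hk Hj) as [m [Hm Hcell]].
    destruct (cell_out n N (kk j) (a j) (b j) c rho m x HN Hk (Hv j) Hj Hcell HK) as [Ho|Ho].
    + exists j, (m * 3 + 1)%nat. split; [lia|]. unfold A2, B2. rewrite block_mod, block_div by lia. simpl. exact Ho.
    + exists j, (m * 3 + 2)%nat. split; [lia|]. unfold A2, B2. rewrite block_mod, block_div by lia. simpl. exact Ho.
  - intros J. apply Rle_trans with (sumR J (fun j => (1 + delta) * box_vol n (a j) (b j))).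
    + apply sumR_le. intros j _. destruct (Hkk j) as [Hk Hw].
      set (G := fun m s => box_vol n (cA n N (kk j) (a j) (b j) c rho m s) (cB n N (kk j) (a j) (b j) c rho m s)).
      replace (sumR (N ^ (n - 1) * 3) (fun m => box_vol n (A1 j m) (B1 j m) + box_vol n (A2 j m) (B2 j m)))
        with (sumR (N ^ (n - 1) * 3) (fun m' => G (m' / 3)%nat (m' mod 3)%nat)).
      rewrite sumR_block by lia. apply box_sum; auto.
      apply sumR_ext. intros m' _. unfold A1, B1, A2, B2, G.
      assert (Z : box_vol n zb zb = 0) by (apply zb_vol; auto).
      destruct (Nat.eqb_spec (m' mod 3) 0) as [E0|E0]. rewrite Z, E0; lra. rewrite Z; lra.
    + rewrite sumR_scal. apply Rmult_le_compat_l. lra. apply partial_le_limit; auto.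
      intros j; apply box_vol_nonneg; auto.
  - assert (bnd n (fun x => E x /\ K x)) by (eapply bnd_sub; [exact HE|]; intros x [Hx _]; exact Hx).
    assert (bnd n (fun x => E x /\ ~ K x)) by (eapply bnd_sub; [exact HE|]; intros x [Hx _]; exact Hx).
    pose proof (OM_le n _ _ Hn H H1). pose proof (OM_le n _ _ Hn H0 H2). unfold K in *. nra. Qed.

Definition ball n (c : nat -> R) rho := fun x : nat -> R => sumR n (fun i => Rabs (x i - c i)) <= rho.

Lemma bnd_ball0 n : bnd n (ball n origin 1).
Proof. exists 1. intros x Hx i Hi. unfold ball, origin in Hx.
  pose proof (sumR_term n (fun i => Rabs (x i - 0)) i (fun j _ => Rabs_pos _) Hi). cbv beta in H.
  rewrite Rminus_0_r in H. lra. Qed.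

Lemma ball_iff n c c' rho rho' x y : rho = rho' ->
  (forall i, (i < n)%nat -> Rabs (x i - c i) = Rabs (y i - c' i)) -> (ball n c rho x <-> ball n c' rho' y).
Proof. intros -> H. unfold ball. rewrite (sumR_ext n _ _ H). tauto. Qed.

Lemma ball_le n c c' rho x y :
  (forall i, (i < n)%nat -> Rabs (y i - c' i) <= Rabs (x i - c i)) -> ball n c rho x -> ball n c' rho y.
Proof. intros H Hb. unfold ball in *. eapply Rle_trans; [apply sumR_le, H|]; auto. Qed.

Lemma step n k (c : nat -> R) r : (0 < n)%nat -> (k < n)%nat -> 0 <= c k ->
  OM n (fun x => ball n origin 1 x /\ ball n c r x) <=
  OM n (fun x => ball n origin 1 x /\ ball n (fun i => if Nat.eqb i k then 0 else c i) r x).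
Proof. intros Hn Hk Hck.
  set (d := fun i => if Nat.eqb i k then 0 else c i).
  set (e := fun i => if Nat.eqb i k then c k else 0).
  set (t := c k / 2).
  set (sg := refl k (c k)).
  set (A := fun x => ball n origin 1 x /\ ball n c r x).
  set (D := fun x => ball n origin 1 x /\ ball n d r x).
  assert (B0 := bnd_ball0 n).
  assert (bA : forall S : (nat -> R) -> Prop, (forall x, S x -> ball n origin 1 x) -> bnd n S) by (intros S HS; eapply bnd_sub; eauto).
  assert (bAs : forall S : (nat -> R) -> Prop, (forall x, S x -> ball n origin 1 (sg x)) -> bnd n S).
  { intros S HS. eapply bnd_sub. apply (bnd_refl n k (c k) (ball n origin 1) B0). intros x Hx. apply HS; auto. }
  assert (F1 : forall x, ball n origin 1 (sg x) <-> ball n e 1 x).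
  { intros x. apply ball_iff; auto. intros i Hi. unfold sg, refl, e, origin.
    destruct (Nat.eqb i k). rewrite <- Rabs_Ropp. f_equal; ring. f_equal; ring. }
  assert (F2 : forall x, ball n c r (sg x) <-> ball n d r x).
  { intros x. apply ball_iff; auto. intros i Hi. unfold sg, refl, d.
    destruct (Nat.eqb_spec i k). subst. rewrite <- Rabs_Ropp. f_equal; ring. auto. }
  assert (F3 : forall x, ball n d r (sg x) <-> ball n c r x).
  { intros x. apply ball_iff; auto. intros i Hi. unfold sg, refl, d.
    destruct (Nat.eqb_spec i k). subst. rewrite <- Rabs_Ropp. f_equal; ring. auto. }
  assert (G1 : forall x, x k <= t -> ball n e 1 x -> ball n origin 1 x).
  { intros x Hx. apply ball_le. intros i Hi. unfold e, origin. destruct (Nat.eqb_spec i k).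
    subst. unfold t in Hx. absc; lra. lra. }
  assert (G2 : forall x, x k <= t -> ball n c r x -> ball n d r x).
  { intros x Hx. apply ball_le. intros i Hi. unfold d. destruct (Nat.eqb_spec i k).
    subst. unfold t in Hx. absc; lra. lra. }
  set (P := fun x => A x /\ x k <= t).
  set (Q := fun x => A (sg x) /\ t <= sg x k).
  set (S' := fun x => D (sg x) /\ t <= sg x k).
  assert (sgk : forall x, sg x k = c k - x k) by (intros x; unfold sg, refl; rewrite Nat.eqb_refl; auto).
  assert (E1 : OM n A <= OM n P + OM n (fun x => A x /\ t <= x k)).
  { eapply Rle_trans; [|apply OM_subadd; auto].
    apply OM_mono; auto. apply bA. intros x [[Hx _]|[Hx _]]; apply Hx.
    intros x Hx. destruct (Rle_dec (x k) t); [left|right]; split; auto; lra.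
    apply bA; intros x [[Hx _] _]; auto. apply bA; intros x [[Hx _] _]; auto. }
  assert (E2 : OM n Q = OM n (fun x => A x /\ t <= x k)).
  { apply (OM_refl n k (c k) (fun x => A x /\ t <= x k)); auto. apply bA; intros x [[Hx _] _]; auto. }
  assert (MQ : Meas n Q).
  { apply (Meas_ext n (fun x => (ball n e 1 x /\ ball n d r x) /\ x k <= t)).
    intros x. unfold Q, A. rewrite F1, F2, sgk. unfold t. split; intros [[H1 H2] H3]; repeat split; auto; lra.
    apply Meas_inter; auto. apply Meas_inter; auto. apply Meas_ball; auto. apply Meas_ball; auto.
    apply Meas_half; auto. }
  assert (bP : bnd n P) by (apply bA; intros x [[Hx _] _]; auto).
  assert (bQ : bnd n Q) by (apply bAs; intros x [[Hx _] _]; auto).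
  pose proof (incl_excl n P Q Hn MQ bP bQ) as E4.
  assert (E5 : OM n (fun x => P x \/ Q x) <= OM n (fun x => D x /\ x k <= t)).
  { apply OM_mono; auto. apply bA; intros x [[Hx _] _]; auto.
    intros x [[[H0 Hc] Hx]|[[H0 Hc] Hx]].
    - split; auto. split; auto.
    - rewrite sgk in Hx. assert (x k <= t) by (unfold t in *; lra).
      rewrite F1 in H0. rewrite F2 in Hc. split; auto. split; auto. }
  assert (E6 : OM n (fun x => P x /\ Q x) <= OM n S').
  { apply OM_mono; auto. apply bAs; intros x [[Hx _] _]; auto.
    intros x [[[H0 Hc] Hx] [[H0' Hc'] Hx']]. split; auto. split; auto. apply F3; auto. }
  assert (E7 : OM n S' = OM n (fun x => D x /\ t <= x k)).
  { apply (OM_refl n k (c k) (fun x => D x /\ t <= x k)); auto. apply bA; intros x [[Hx _] _]; auto. }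
  pose proof (OM_split n k t D Hn Hk (bA D (fun x Hx => proj1 Hx))) as E8.
  fold A. fold d. fold D. lra. Qed.

Definition wz m (c : nat -> R) := fun i => if andb (Nat.ltb 0 i) (Nat.leb i m) then 0 else c i.

Lemma OM_ball_ext n c c' r : (forall i, (i < n)%nat -> c i = c' i) ->
  OM n (fun x => ball n origin 1 x /\ ball n c r x) = OM n (fun x => ball n origin 1 x /\ ball n c' r x).
Proof. intros H. apply OM_ext. intros x. rewrite (ball_iff n c c' r r x x); [tauto|auto|].
  intros i Hi. rewrite H; auto. Qed.

Lemma iter n (c : nat -> R) r : (0 < n)%nat -> (forall i, (i < n)%nat -> 0 <= c i) -> forall m,
  OM n (fun x => ball n origin 1 x /\ ball n c r x) <= OM n (fun x => ball n origin 1 x /\ ball n (wz m c) r x).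
Proof. intros Hn Hc m. induction m.
  - apply Req_le, OM_ball_ext. intros i _. unfold wz. destruct (Nat.ltb_spec 0 i), (Nat.leb_spec i 0); simpl; auto; lia.
  - eapply Rle_trans; [exact IHm|]. destruct (Nat.lt_ge_cases (S m) n).
    + eapply Rle_trans. apply (step n (S m) (wz m c) r Hn H).
      unfold wz. destruct (Nat.ltb_spec 0 (S m)), (Nat.leb_spec (S m) m); simpl; try lia. apply Hc; auto.
      apply Req_le, OM_ball_ext. intros i _. unfold wz.
      destruct (Nat.eqb_spec i (S m)), (Nat.ltb_spec 0 i), (Nat.leb_spec i m), (Nat.leb_spec i (S m)); simpl; auto; lia.
    + apply Req_le, OM_ball_ext. intros i Hi. unfold wz.
      destruct (Nat.ltb_spec 0 i), (Nat.leb_spec i m), (Nat.leb_spec i (S m)); simpl; auto; lia. Qed.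

Theorem mainTheorem9 (n : nat) (r : R) (c : nat -> R) :
  (0 < n)%nat -> 0 < r -> (forall i, (i < n)%nat -> 0 <= c i) ->
  let c' := fun i => if Nat.eqb i 0 then c 0%nat else 0 in
  exists v1 v2 : R,
    is_volume n (fun x => l1ball n origin 1 x /\ l1ball n c r x) v1 /\
    is_volume n (fun x => l1ball n origin 1 x /\ l1ball n c' r x) v2 /\
    v1 <= v2.
Proof. intros Hn Hr Hc c'.
  exists (OM n (fun x => ball n origin 1 x /\ ball n c r x)), (OM n (fun x => ball n origin 1 x /\ ball n c' r x)).
  split; [|split].
  - apply vol_exists; auto. eapply bnd_sub. apply bnd_ball0. intros x [Hx _]; exact Hx.
  - apply vol_exists; auto. eapply bnd_sub. apply bnd_ball0. intros x [Hx _]; exact Hx.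
  - eapply Rle_trans. apply (iter n c r Hn Hc (n - 1)).
    apply Req_le, OM_ball_ext. intros i Hi. unfold wz, c'.
    destruct (Nat.eqb_spec i 0), (Nat.ltb_spec 0 i), (Nat.leb_spec i (n - 1)); simpl; subst; auto; lia. Qed.
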